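(* For every integer $m\ge1$, as formal power series (or entire functions) in $z$, $$\sum_{n\ge0}\frac{(m+n-1)!}{(2m+n-1)!}\,\frac{z^n}{n!}=\frac{1}{z^{2m-1}}\sum_{k=0}^{m-1}(-1)^k\binom{m+k-1}{2k}2^k(2k-1)!!\,z^{m-1-k}\big(e^z+(-1)^{m+k}\big),$$ where $(2k-1)!!=1\cdot3\cdots(2k-1)$ and $(-1)!!=1$. *)

(* Defs.v *)
From Stdlib Require Import Reals Arith Factorial Binomial.
Open Scope R_scope.

(* odd double factorial: dfact_odd k = (2k-1)!! = 1*3*...*(2k-1), dfact_odd 0 = (-1)!! = 1 *)
Fixpoint dfact_odd (k : nat) : nat :=
  match k with
  | O => 1%nat
  | S k' => ((2 * k' + 1) * dfact_odd k')%nat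
  end.

Definition lhs_term (m : nat) (z : R) (n : nat) : R :=
  INR (fact (m + n - 1)) / INR (fact (2 * m + n - 1)) * (z ^ n / INR (fact n)).

Definition rhs (m : nat) (z : R) : R :=
  / z ^ (2 * m - 1) *
  sum_f_R0 (fun k => (-1) ^ k * C (m + k - 1) (2 * k) * 2 ^ k * INR (dfact_odd k)
                     * z ^ (m - 1 - k) * (exp z + (-1) ^ (m + k))) (m - 1).

(* Main.v *)
Require Import Defs.
From Stdlib Require Import Reals.
From Coquelicot Require Import Coquelicot.
From Stdlib Require Import Reals Lra Lia Arith Factorial.
Open Scope R_scope.

Definition coef (j n : nat) : R :=
  INR (fact (j+n)) / INR (fact (2*j+n+1)) / INR (fact n).

Lemma INR_fact_pos n : 0 < INR (fact n).
Proof. apply lt_0_INR, lt_O_fact. Qed.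

Lemma coef_S j n : coef j (S n) = coef j n * (INR (j+n+1) / (INR (2*j+n+2) * INR (n+1))).
Proof.
  unfold coef.
  replace (j + S n)%nat with (S (j+n)) by lia.
  replace (2*j + S n + 1)%nat with (S (2*j+n+1)) by lia.
  rewrite !fact_simpl, !mult_INR.
  replace (S (j+n)) with (j+n+1)%nat by lia.
  replace (S (2*j+n+1)) with (2*j+n+2)%nat by lia.
  replace (S n) with (n+1)%nat by lia.
  pose proof (INR_fact_pos (j+n)). pose proof (INR_fact_pos (2*j+n+1)). pose proof (INR_fact_pos n).
  rewrite !plus_INR. simpl INR. field. repeat split; try lra.
  all: try (pose proof (pos_INR n); lra); try (match goal with |- INR ?a + _ + _ <> 0 => pose proof (pos_INR a); pose proof (pos_INR n); lra end); apply Rgt_not_eq, INR_fact_pos.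
Qed.

Lemma coef_pos j n : 0 < coef j n.
Proof.
  unfold coef. pose proof (INR_fact_pos (j+n)). pose proof (INR_fact_pos (2*j+n+1)). pose proof (INR_fact_pos n).
  apply Rdiv_lt_0_compat; [apply Rdiv_lt_0_compat|]; lra.
Qed.

Lemma coef_radius j : CV_radius (coef j) = p_infty.
Proof.
  apply CV_radius_infinite_DAlembert.
  - intro n. apply Rgt_not_eq, coef_pos.
  - apply is_lim_seq_le_le with (u := fun _ => 0) (w := fun n => / INR (S n)).
    + intro n. rewrite coef_S.
      pose proof (coef_pos j n).
      assert (Ha : 0 <= INR (j+n+1)) by apply pos_INR.
      assert (Hb : 0 < INR (2*j+n+2)) by (apply lt_0_INR; lia).
      assert (Hc : 0 < INR (n+1)) by (apply lt_0_INR; lia).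
      assert (Hd : INR (j+n+1) <= INR (2*j+n+2)) by (apply le_INR; lia).
      replace (coef j n * (INR (j + n + 1) / (INR (2 * j + n + 2) * INR (n + 1))) / coef j n)
        with (INR (j + n + 1) / (INR (2 * j + n + 2) * INR (n + 1))) by (field; repeat split; lra).
      rewrite Rabs_pos_eq.
      2: { apply Rmult_le_pos; [lra|]. apply Rlt_le, Rinv_0_lt_compat, Rmult_lt_0_compat; lra. }
      replace (INR (S n)) with (INR (n+1)) by (f_equal; lia).
      split.
      * apply Rmult_le_pos; [lra|]. apply Rlt_le, Rinv_0_lt_compat, Rmult_lt_0_compat; lra.
      * unfold Rdiv. rewrite Rinv_mult.
        rewrite <- Rmult_assoc. rewrite <- (Rmult_1_l (/ INR (n+1))) at 2.
        apply Rmult_le_compat_r. apply Rlt_le, Rinv_0_lt_compat; lra.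
        apply (Rmult_le_reg_r (INR (2*j+n+2))); [lra|].
        rewrite Rmult_assoc, Rinv_l; lra.
    + apply is_lim_seq_const.
    + apply (is_lim_seq_incr_1 (fun n => / INR n)).
      replace (Finite 0) with (Rbar_inv p_infty) by reflexivity.
      apply is_lim_seq_inv. apply is_lim_seq_INR. discriminate.
Qed.

Lemma coef_Sj j k : coef (S j) k = coef j (S k) * (INR (k+1) / INR (2*j+k+3)).
Proof.
  unfold coef.
  replace (S j + k)%nat with (j + S k)%nat by lia.
  replace (2 * S j + k + 1)%nat with (S (2*j + S k + 1)) by lia.
  rewrite (fact_simpl (2*j+S k+1)), (fact_simpl k), !mult_INR.
  replace (INR (S (2*j+S k+1))) with (INR (2*j+k+3)) by (f_equal; lia).
  replace (INR (S k)) with (INR (k+1)) by (f_equal; lia).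
  pose proof (INR_fact_pos (j+S k)). pose proof (INR_fact_pos (2*j+S k+1)). pose proof (INR_fact_pos k).
  assert (0 < INR (2*j+k+3)) by (apply lt_0_INR; lia).
  assert (0 < INR (k+1)) by (apply lt_0_INR; lia).
  field. repeat split; lra.
Qed.

Definition g j z := PSeries (coef j) z.

Lemma g_rec j z : z * g (S j) z = 2 * PSeries (PS_derive (coef j)) z - g j z.
Proof.
  assert (Hr : forall x, Rbar_lt (Rabs x) (CV_radius (coef j))) by (intro; rewrite coef_radius; exact I).
  unfold g. rewrite <- PSeries_incr_1, <- PSeries_scal, <- PSeries_minus.
  2: { apply ex_pseries_scal; [unfold mult; simpl; ring | apply ex_pseries_derive, Hr]. }
  2: { apply CV_radius_inside, Hr. }
  apply PSeries_ext. intro n. unfold PS_minus, PS_scal, PS_derive, PS_incr_1.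
  unfold plus, scal, opp, zero; simpl. change (mult 2 ?x) with (2 * x).
  destruct n as [|k].
  - rewrite coef_S. rewrite !plus_INR, !mult_INR. simpl INR.
    pose proof (pos_INR j). field. lra.
  - rewrite coef_Sj, (coef_S j (S k)). rewrite !plus_INR, !mult_INR, !S_INR. simpl INR.
    pose proof (pos_INR j). pose proof (pos_INR k). field. lra.
Qed.
Definition E q z := exp z / z^q + / (-z)^q.
Definition E' q z := exp z / z^q - INR q * exp z / z^(q+1) + INR q / (-z)^(q+1).
Lemma E_der q z : z <> 0 -> is_derive (E q) z (E' q z).
Proof. intro hz. assert (hz' : -z <> 0) by lra. unfold E. auto_derive.
  - split; [apply pow_nonzero; auto|split; [apply pow_nonzero; auto|trivial]].
  - unfold E'. destruct q as [|p].
    + simpl. field. auto.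
    + replace (S p + 1)%nat with (S (S p)) by lia. simpl Init.Nat.pred.
      simpl pow. pose proof (pow_nonzero z p hz). pose proof (pow_nonzero (-z) p hz').
      field. repeat split; auto.
Qed.
Lemma E_rec q z : z <> 0 -> (2 * E' q z - E q z) / z = E (q+1) z - 2 * INR q * E (q+2) z.
Proof. intro hz. assert (hz' : -z <> 0) by lra. unfold E, E'.
  replace (q+2)%nat with (S (S q)) by lia. replace (q+1)%nat with (S q) by lia.
  simpl pow. pose proof (pow_nonzero z q hz). pose proof (pow_nonzero (-z) q hz').
  field. repeat split; auto.
Qed.

Definition aco (j k : nat) : R :=
  if (k <=? j)%nat then (-1)^k * INR (fact (j+k)) / (INR (fact k) * INR (fact (j-k))) else 0.

Lemma INR_fact_nz n : INR (fact n) <> 0.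
Proof. apply not_0_INR, fact_neq_0. Qed.

Lemma aco_0 j : aco (S j) 0 = aco j 0.
Proof. unfold aco. rewrite !Nat.add_0_r, !Nat.sub_0_r.
  change ((0 <=? S j)%nat) with true. change ((0 <=? j)%nat) with true. cbv iota.
  pose proof (INR_fact_nz (S j)). pose proof (INR_fact_nz j). pose proof (INR_fact_nz 0).
  field. auto. Qed.

Lemma aco_S j k : (k <= j)%nat -> aco (S j) (S k) = aco j (S k) - 2 * INR (j+1+k) * aco j k.
Proof.
  intro hk. unfold aco.
  assert (E1 : (S k <=? S j)%nat = true) by (apply Nat.leb_le; lia).
  assert (E2 : (k <=? j)%nat = true) by (apply Nat.leb_le; lia).
  rewrite E1, E2.
  destruct (Nat.eq_dec k j) as [->|hne].
  - assert (E3 : (S j <=? j)%nat = false) by (apply Nat.leb_gt; lia). rewrite E3.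
    replace (S j - S j)%nat with 0%nat by lia. replace (j - j)%nat with 0%nat by lia.
    replace (S j + S j)%nat with (S (S (j+j))) by lia.
    rewrite !fact_simpl, !mult_INR, !S_INR, !plus_INR. simpl pow. simpl (fact 0). simpl INR.
    pose proof (INR_fact_nz (j+j)). pose proof (INR_fact_nz j). pose proof (pos_INR j).
    field. repeat split; auto; lra.
  - assert (E3 : (S k <=? j)%nat = true) by (apply Nat.leb_le; lia). rewrite E3.
    replace (S j - S k)%nat with (j - k)%nat by lia.
    replace (j - k)%nat with (S (j - S k)) by lia.
    replace (S j + S k)%nat with (S (S (j+k))) by lia.
    replace (j + S k)%nat with (S (j+k)) by lia.
    rewrite !fact_simpl, !mult_INR, !S_INR, !plus_INR. simpl pow.
    replace (INR (j - S k)) with (INR j - INR k - 1) by (rewrite minus_INR by lia; rewrite S_INR; lra).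
    pose proof (INR_fact_nz (j+k)). pose proof (INR_fact_nz k). pose proof (INR_fact_nz (j - S k)).
    pose proof (pos_INR j). pose proof (pos_INR k).
    assert (INR j - INR k - 1 + 1 <> 0) by (intro; apply hne; apply INR_eq; lra).
    change (INR 1) with 1. set (u := (-1)^k). set (F1 := INR (fact (j+k))). set (F2 := INR (fact k)). set (F3 := INR (fact (j - S k))). field. repeat split; auto; lra.
Qed.

Definition F j z := sum_f_R0 (fun k => aco j k * E (j+1+k) z) j.
Definition F' j z := sum_f_R0 (fun k => aco j k * E' (j+1+k) z) j.

Lemma sum_lin (a x y : nat -> R) n z :
  (2 * sum_f_R0 (fun k => a k * x k) n - sum_f_R0 (fun k => a k * y k) n) / z
  = sum_f_R0 (fun k => a k * ((2 * x k - y k) / z)) n.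
Proof. induction n; simpl. unfold Rdiv; ring. rewrite <- IHn. unfold Rdiv; ring. Qed.

Lemma F_rec j z : z <> 0 -> (2 * F' j z - F j z) / z = F (S j) z.
Proof.
  intro hz. unfold F, F'. rewrite sum_lin.
  rewrite (sum_eq _ (fun k => aco j k * E (j+2+k) z - 2 * INR (j+1+k) * aco j k * E (j+3+k) z)).
  2: { intros k _. rewrite E_rec by auto.
       replace (j+1+k+1)%nat with (j+2+k)%nat by lia.
       replace (j+1+k+2)%nat with (j+3+k)%nat by lia. ring. }
  rewrite minus_sum.
  assert (H0 : sum_f_R0 (fun k => aco j k * E (j + 2 + k) z) j =
     aco j 0 * E (j+2) z + sum_f_R0 (fun k => aco j (S k) * E (j+3+k) z) j).
  { rewrite <- (Rplus_0_r (sum_f_R0 _ j)).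
    replace 0 with (aco j (S j) * E (j+2+S j) z).
    2: { unfold aco. replace ((S j <=? j)%nat) with false by (symmetry; apply Nat.leb_gt; lia). ring. }
    rewrite <- (tech5 (fun k => aco j k * E (j + 2 + k) z) j).
    rewrite decomp_sum by lia. simpl Init.Nat.pred.
    rewrite Nat.add_0_r. f_equal. apply sum_eq. intros i _. f_equal. f_equal. lia. }
  rewrite H0. unfold F.
  rewrite (decomp_sum _ (S j)) by lia. simpl Init.Nat.pred.
  rewrite aco_0. replace (S j + 1 + 0)%nat with (j+2)%nat by lia.
  rewrite (sum_eq (fun i => (fun k => aco (S j) k * E (S j + 1 + k) z) (S i)) (fun k => aco j (S k) * E (j+3+k) z - 2 * INR (j+1+k) * aco j k * E (j+3+k) z)).
  2: { intros i hi. cbv beta. rewrite aco_S by auto. replace (S j + 1 + S i)%nat with (j+3+i)%nat by lia. ring. }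
  rewrite minus_sum. ring.
Qed.

Lemma sum_der (f : nat -> R -> R) (f' : nat -> R) n z :
  (forall k, is_derive (f k) z (f' k)) ->
  is_derive (fun x => sum_f_R0 (fun k => f k x) n) z (sum_f_R0 f' n).
Proof.
  intro H. induction n; simpl. apply H. apply (is_derive_plus _ _ z _ _ IHn (H (S n))).
Qed.

Lemma F_der j z : z <> 0 -> is_derive (F j) z (F' j z).
Proof.
  intro hz. unfold F, F'.
  apply (sum_der (fun k x => aco j k * E (j+1+k) x) (fun k => aco j k * E' (j+1+k) z)).
  intro k. apply is_derive_scal. apply E_der. auto.
Qed.

Lemma g_0 z : z <> 0 -> g 0 z = F 0 z.
Proof.
  intro hz.
  assert (Hex : ex_pseries (fun n => / INR (fact n)) z) by (eexists; apply is_exp_Reals).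
  assert (He : exp z = 1 + z * g 0 z).
  { rewrite exp_Reals, PSeries_decr_1 by exact Hex. simpl (fact 0). simpl INR. rewrite Rinv_1.
    f_equal. f_equal. unfold g. apply PSeries_ext. intro n. unfold PS_decr_1, coef.
    replace (2*0+n+1)%nat with (S n) by lia. simpl (0+n)%nat.
    pose proof (INR_fact_nz n). pose proof (INR_fact_nz (S n)). field. auto. }
  unfold F, E. simpl sum_f_R0. unfold aco. simpl.
  rewrite He. field. auto.
Qed.

Lemma g_F j : forall z, z <> 0 -> g j z = F j z.
Proof.
  induction j as [|j IH]; intros z hz.
  - apply g_0; auto.
  - assert (Hr : Rbar_lt (Rabs z) (CV_radius (coef j))) by (rewrite coef_radius; exact I).
    assert (Hd1 := is_derive_PSeries _ _ Hr).
    assert (Hd2 : is_derive (g j) z (F' j z)).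
    { apply (is_derive_ext_loc (F j)). 2: apply F_der; auto.
      exists (mkposreal (Rabs z) (Rabs_pos_lt z hz)). intros t Ht.
      unfold ball in Ht. simpl in Ht. unfold AbsRing_ball, abs, minus, plus, opp in Ht. simpl in Ht.
      symmetry. apply IH. intro ht. rewrite ht, Rplus_0_l, Rabs_Ropp in Ht. lra. }
    apply is_derive_unique in Hd1. apply is_derive_unique in Hd2.
    change (g j) with (PSeries (coef j)) in Hd2. rewrite Hd1 in Hd2.
    pose proof (g_rec j z) as Hrec. rewrite Hd2 in Hrec.
    rewrite <- F_rec by auto. rewrite <- (IH z hz). rewrite <- Hrec. field. auto.
Qed.

Lemma dfact_fact i : INR (fact (2*i)) = 2^i * INR (fact i) * INR (dfact_odd i).
Proof.
  induction i. simpl. ring.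
  replace (2 * S i)%nat with (S (S (2*i))) by lia.
  rewrite !fact_simpl, !mult_INR, IHi. simpl dfact_odd. rewrite mult_INR.
  rewrite !S_INR, !plus_INR, !mult_INR. simpl pow. simpl INR. ring.
Qed.

Lemma rhs_F j z : z <> 0 -> rhs (S j) z = F j z.
Proof.
  intro hz. unfold rhs, F. replace (S j - 1)%nat with j by lia.
  rewrite scal_sum. apply sum_eq. intros i hi.
  unfold aco. replace ((i <=? j)%nat) with true by (symmetry; apply Nat.leb_le; lia).
  unfold Binomial.C, E.
  replace (S j + i - 1)%nat with (j+i)%nat by lia.
  replace (j + i - 2*i)%nat with (j - i)%nat by lia.
  replace (j - i)%nat with (j - i)%nat by lia.
  rewrite dfact_fact.
  replace (2 * S j - 1)%nat with ((j - i) + (j+1+i))%nat by lia.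
  replace (S j + i)%nat with (j+1+i)%nat by lia.
  replace (S j - 1 - i)%nat with (j - i)%nat by lia.
  rewrite (pow_add z (j-i)).
  replace (-z) with (-1 * z) by ring. rewrite Rpow_mult_distr.
  set (u := (-1)^(j+1+i)).
  assert (Hu : u * u = 1) by (unfold u; rewrite <- Rpow_mult_distr; replace (-1 * -1) with 1 by ring; apply pow1).
  assert (Hu0 : u <> 0) by (intro h; rewrite h in Hu; lra).
  pose proof (pow_nonzero z (j-i) hz). pose proof (pow_nonzero z (j+1+i) hz).
  pose proof (pow_nonzero 2 i ltac:(lra)).
  pose proof (pow_nonzero (-1) i ltac:(lra)).
  pose proof (INR_fact_nz (j+i)). pose proof (INR_fact_nz i). pose proof (INR_fact_nz (j-i)).
  assert (INR (dfact_odd i) <> 0).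
  { apply not_0_INR. clear. induction i; simpl; lia. }
  replace (/ (u * z ^ (j + 1 + i))) with (u / z ^ (j+1+i)).
  2: { field_simplify; auto. rewrite <- Hu at 1. field. auto. }
  field. repeat split; auto.
Qed.

Theorem mainTheorem17 (m : nat) (hm : (1 <= m)%nat) (z : R) (hz : z <> 0) :
  infinite_sum (lhs_term m z) (rhs m z).
Proof.
  destruct m as [|j]; [lia|].
  rewrite rhs_F by auto. rewrite <- g_F by auto.
  apply is_series_Reals.
  assert (Hr : Rbar_lt (Rabs z) (CV_radius (coef j))) by (rewrite coef_radius; exact I).
  pose proof (PSeries_correct _ _ (CV_radius_inside _ _ Hr)) as H.
  unfold is_pseries in H. unfold g.
  eapply is_series_ext; [|exact H]. intro n.
  match goal with |- ?a = ?b => change (@eq R a b) end.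
  unfold lhs_term, coef.
  replace (S j + n - 1)%nat with (j+n)%nat by lia.
  replace (2 * S j + n - 1)%nat with (2*j+n+1)%nat by lia.
  rewrite pow_n_pow. change (scal (z^n) ?b) with (mult (z^n) b). change (mult ?a ?b) with (a * b).
  pose proof (INR_fact_nz n). pose proof (INR_fact_nz (2*j+n+1)). field. auto.
Qed.
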